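(* For every integer $p\ge1$ and every complex $z$ with $e^z\ne1$, $$\sum_{n\ge0}\mathcal{B}_{n,p}\frac{z^n}{n!}=\frac{p\,\exp(e^z-1)}{(e^z-1)^p}\,\gamma\big(p,e^z-1\big).$$
   Context: $\gamma(s,w)=\int_0^w e^{-t}t^{s-1}\,dt$ is the lower incomplete gamma function (for integer $s\ge1$ an entire function of $w$). For an integer $p\ge0$, the $p$-Bell numbers $\mathcal{B}_{n,p}$ are defined by $\sum_{n\ge0}\mathcal{B}_{n,p}\frac{z^n}{n!}=\sum_{n\ge0}\binom{n+p}{p}^{-1}\frac{(e^z-1)^n}{n!}$ (an entire function of $z$ whose Taylor series is the left side). *)

(* Defs.v *)
From Stdlib Require Import Reals.
From Coquelicot Require Import Coquelicot.

Definition Cexp (z : C) : C :=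
  (RtoC (exp (Re z)) * (RtoC (cos (Im z)) + Ci * RtoC (sin (Im z))))%C.

(* Lower incomplete gamma function for integer s >= 1, as the integral of
   e^{-t} t^{s-1} along the straight segment from 0 to w (parametrised by
   t = u w, u in [0,1]); for integer s >= 1 the integrand is entire, so the
   integral is path independent. *)
Definition lower_gamma (s : nat) (w : C) : C :=
  (w * RInt (V := C_R_CompleteNormedModule)
         (fun u : R => Cexp (- (RtoC u * w)) * Cpow (RtoC u * w) (s - 1))%C
         0%R 1%R)%C.

Fixpoint stirling2 (n k : nat) : nat :=
  match n, k with
  | O, O => 1
  | O, S _ => 0
  | S _, O => 0
  | S n', S k' => S k' * stirling2 n' (S k') + stirling2 n' k'
  end.

(* p-Bell numbers: the coefficients of z^n/n! in
   sum_k binom(k+p,p)^{-1} (e^z-1)^k/k!; since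
   (e^z-1)^k/k! = sum_n S(n,k) z^n/n!, this is
   B_{n,p} = sum_{k=0}^n S(n,k) / binom(k+p,p). *)
Definition pBell (n p : nat) : R :=
  sum_f_R0 (fun k => INR (stirling2 n k) / Binomial.C (k + p) p) n.

(* Main.v *)
Require Import Defs.
From Stdlib Require Import Reals Factorial Lra Lia.
From Coquelicot Require Import Coquelicot.

Open Scope C_scope.

Fixpoint csum (f : nat -> C) (n : nat) : C :=
  match n with O => 0 | S m => csum f m + f m end.

Lemma csum_ext (f g : nat -> C) n : (forall k, (k < n)%nat -> f k = g k) -> csum f n = csum g n.
Proof. induction n; simpl; intros H; auto. rewrite IHn, H; auto; intros; apply H; lia. Qed.

Lemma csum_plus (f g : nat -> C) n : csum (fun k => f k + g k) n = csum f n + csum g n.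
Proof. induction n; simpl. ring. rewrite IHn; ring. Qed.

Lemma csum_opp (f : nat -> C) n : csum (fun k => - f k) n = - csum f n.
Proof. induction n; simpl. ring. rewrite IHn; ring. Qed.

Lemma csum_mult_l (c : C) (f : nat -> C) n : csum (fun k => c * f k) n = c * csum f n.
Proof. induction n; simpl. ring. rewrite IHn; ring. Qed.

Lemma csum_mult_r (c : C) (f : nat -> C) n : csum (fun k => f k * c) n = csum f n * c.
Proof. induction n; simpl. ring. rewrite IHn; ring. Qed.

Lemma csum_shift (f : nat -> C) n : csum f (S n) = f O + csum (fun k => f (S k)) n.
Proof. induction n. simpl; ring. change (csum f (S (S n))) with (csum f (S n) + f (S n)).
  rewrite IHn; simpl; ring. Qed.

Lemma csum_swap (g : nat -> nat -> C) n m :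
  csum (fun i => csum (fun j => g i j) m) n = csum (fun j => csum (fun i => g i j) n) m.
Proof. induction n; simpl.
  - induction m; simpl; auto. rewrite <- IHm; ring.
  - rewrite IHn, <- csum_plus. reflexivity. Qed.

Lemma csum_zero n : csum (fun _ => 0) n = 0.
Proof. induction n; simpl; auto. rewrite IHn; ring. Qed.

Lemma sum_n_csum (f : nat -> C) N : sum_n f N = csum f (S N).
Proof. induction N. rewrite sum_O; simpl; ring.
  rewrite sum_Sn, IHN. reflexivity. Qed.

Lemma binC_n_0 n : Binomial.C n 0 = 1%R.
Proof. unfold Binomial.C. rewrite Nat.sub_0_r. simpl. field. apply INR_fact_neq_0. Qed.
Lemma binC_n_n n : Binomial.C n n = 1%R.
Proof. unfold Binomial.C. rewrite Nat.sub_diag. simpl. field. apply INR_fact_neq_0. Qed.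

Lemma csum_S (f : nat -> C) n : csum f (S n) = csum f n + f n.
Proof. reflexivity. Qed.

Definition bint (x y : C) m k := RtoC (Binomial.C m k) * Cpow x k * Cpow y (m - k).

Lemma bint_0 x y m : bint x y m 0 = Cpow y m.
Proof. unfold bint. rewrite binC_n_0, Nat.sub_0_r. simpl. ring. Qed.
Lemma bint_n x y m : bint x y m m = Cpow x m.
Proof. unfold bint. rewrite binC_n_n, Nat.sub_diag. simpl. ring. Qed.

Lemma Cbinom (x y : C) n : Cpow (x + y) n = csum (bint x y n) (S n).
Proof.
  induction n.
  - simpl. rewrite bint_0. simpl. ring.
  - rewrite Cpow_S, IHn. rewrite (csum_shift (bint x y (S n)) (S n)), (csum_S (fun k => bint x y (S n) (S k)) n).
    rewrite (csum_ext (fun k => bint x y (S n) (S k))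
       (fun k => x * bint x y n k + y * bint x y n (S k))).
    2:{ intros k Hk. unfold bint. rewrite <- Binomial.pascal by lia. rewrite RtoC_plus.
        simpl. replace (n - k)%nat with (S (n - S k)) by lia. simpl. ring. }
    rewrite csum_plus, csum_mult_l, csum_mult_l.
    transitivity (x * (csum (bint x y n) n + bint x y n n) + y * (bint x y n 0 + csum (fun k => bint x y n (S k)) n)).
    { rewrite <- csum_S, <- csum_shift. ring. }
    rewrite !bint_0, !bint_n. simpl. ring.
Qed.

Definition cconv (u : nat -> C) (l : C) :=
  forall eps : R, (0 < eps)%R -> exists N, forall n, (N <= n)%nat -> (Cmod (u n - l) < eps)%R.

Notation Cser := (@is_series C_AbsRing C_NormedModule).

Lemma Cser_cconv (a : nat -> C) l : Cser a l <-> cconv (fun N => csum a (S N)) l.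
Proof.
  unfold is_series. rewrite (filterlim_locally_ball_norm (K:=C_AbsRing) (U:=C_NormedModule)).
  split.
  - intros H eps Heps. destruct (H (mkposreal eps Heps)) as [N HN]. exists N. intros n Hn.
    specialize (HN n Hn). rewrite sum_n_csum in HN. exact HN.
  - intros H eps. destruct (H eps (cond_pos eps)) as [N HN]. exists N. intros n Hn.
    unfold ball_norm. rewrite sum_n_csum. exact (HN n Hn).
Qed.

Lemma csum_fst (f : nat -> C) N : fst (csum f (S N)) = sum_f_R0 (fun k => fst (f k)) N.
Proof. induction N. simpl. ring. rewrite csum_S. unfold Cplus at 1. simpl sum_f_R0. rewrite <- IHN. reflexivity. Qed.

Lemma csum_snd (f : nat -> C) N : snd (csum f (S N)) = sum_f_R0 (fun k => snd (f k)) N.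
Proof. induction N. simpl. ring. rewrite csum_S. unfold Cplus at 1. simpl sum_f_R0. rewrite <- IHN. reflexivity. Qed.

Lemma Cmod_le_re_im (c : C) : (Cmod c <= Rabs (fst c) + Rabs (snd c))%R.
Proof.
  destruct c as [a b]. unfold Cmod. simpl.
  rewrite <- (sqrt_Rsqr (Rabs a + Rabs b)) by (pose proof (Rabs_pos a); pose proof (Rabs_pos b); lra).
  apply sqrt_le_1_alt. unfold Rsqr.
  pose proof (Rabs_pos a); pose proof (Rabs_pos b).
  replace (a * (a * 1) + b * (b * 1))%R with (Rabs a * Rabs a + Rabs b * Rabs b)%R.
  2:{ rewrite <- !Rabs_mult. rewrite !Rabs_pos_eq by nra. ring. }
  nra.
Qed.

Lemma Cser_re_im (a : nat -> C) lr li :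
  infinite_sum (fun n => fst (a n)) lr -> infinite_sum (fun n => snd (a n)) li -> Cser a (lr, li).
Proof.
  intros Hr Hi. apply Cser_cconv. intros eps Heps.
  destruct (Hr (eps/2)%R ltac:(lra)) as [N1 H1]. destruct (Hi (eps/2)%R ltac:(lra)) as [N2 H2].
  exists (max N1 N2). intros n Hn.
  eapply Rle_lt_trans. apply Cmod_le_re_im.
  specialize (H1 n ltac:(lia)). specialize (H2 n ltac:(lia)). unfold R_dist in *.
  rewrite <- csum_fst in H1. rewrite <- csum_snd in H2.
  set (u := csum a (S n)) in *.
  replace (fst (u - (lr, li))) with (fst u - lr)%R by (destruct u; simpl; ring).
  replace (snd (u - (lr, li))) with (snd u - li)%R by (destruct u; simpl; ring).
  lra.
Qed.

Lemma Cser_re (a : nat -> C) l : Cser a l -> infinite_sum (fun n => fst (a n)) (fst l).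
Proof.
  intros H. apply Cser_cconv in H. intros eps Heps. destruct (H eps Heps) as [N HN].
  exists N. intros n Hn. unfold R_dist. rewrite <- csum_fst.
  eapply Rle_lt_trans. 2: apply (HN n Hn). set (u := csum a (S n)).
  destruct l as [l1 l2]. eapply Rle_trans. 2: apply re_le_Cmod. destruct u; simpl. right. f_equal.
Qed.

Open Scope R_scope.

Lemma exp_series (a : R) : infinite_sum (fun n => / INR (fact n) * a ^ n) (exp a).
Proof. unfold exp. destruct (exist_exp a) as [l Hl]. simpl. exact Hl. Qed.

Definition ilv_e (e : nat -> R) n := if Nat.even n then e (Nat.div2 n) else 0.
Definition ilv_o (e : nat -> R) n := if Nat.even n then 0 else e (Nat.div2 n).

Lemma even_2m m : Nat.even (2 * m) = true.
Proof. rewrite Nat.even_mul. reflexivity. Qed.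
Lemma even_2m1 m : Nat.even (S (2 * m)) = false.
Proof. rewrite Nat.even_succ. unfold Nat.odd. rewrite even_2m. reflexivity. Qed.
Lemma div2_2m1 m : Nat.div2 (S (2 * m)) = m.
Proof. induction m. reflexivity. replace (S (2 * S m)) with (S (S (S (2 * m)))) by lia.
  simpl. simpl in IHm. rewrite IHm. reflexivity. Qed.

Lemma ilv_e_sums (e : nat -> R) m :
  sum_f_R0 (ilv_e e) (2 * m) = sum_f_R0 e m /\ sum_f_R0 (ilv_e e) (S (2 * m)) = sum_f_R0 e m.
Proof.
  assert (H0 : forall m, ilv_e e (2 * m) = e m).
  { intros k. unfold ilv_e. rewrite even_2m, Nat.div2_double. reflexivity. }
  assert (H1 : forall m, ilv_e e (S (2 * m)) = 0).
  { intros k. unfold ilv_e. rewrite even_2m1. reflexivity. }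
  induction m.
  - pose proof (H0 0%nat) as A0. pose proof (H1 0%nat) as A1. simpl in *. rewrite A0, A1. split; ring.
  - destruct IHm as [Ia Ib].
    assert (E : sum_f_R0 (ilv_e e) (2 * S m) = sum_f_R0 e (S m)).
    { replace (2 * S m)%nat with (S (S (2 * m))) by lia. rewrite tech5.
      rewrite Ib. replace (S (S (2 * m))) with (2 * S m)%nat by lia. rewrite H0. reflexivity. }
    split; auto. rewrite tech5, E, H1. ring.
Qed.

Lemma ilv_o_sums (e : nat -> R) m :
  sum_f_R0 (ilv_o e) (S (2 * m)) = sum_f_R0 e m /\ sum_f_R0 (ilv_o e) (2 * S m) = sum_f_R0 e m.
Proof.
  assert (H0 : forall m, ilv_o e (2 * m) = 0).
  { intros k. unfold ilv_o. rewrite even_2m. reflexivity. }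
  assert (H1 : forall m, ilv_o e (S (2 * m)) = e m).
  { intros k. unfold ilv_o. rewrite even_2m1, div2_2m1. reflexivity. }
  induction m.
  - pose proof (H0 0%nat) as A0. pose proof (H1 0%nat) as A1. pose proof (H0 1%nat) as A2. simpl in *. rewrite A0, A1, A2. split; ring.
  - destruct IHm as [Ia Ib].
    assert (E : sum_f_R0 (ilv_o e) (S (2 * S m)) = sum_f_R0 e (S m)).
    { rewrite tech5, Ib, H1. reflexivity. }
    split; auto. replace (2 * S (S m))%nat with (S (S (2 * S m))) by lia.
    rewrite tech5, E. replace (S (S (2 * S m))) with (2 * S (S m))%nat by lia.
    rewrite H0. ring.
Qed.

Lemma ilv_e_inf (e : nat -> R) l : infinite_sum e l -> infinite_sum (ilv_e e) l.
Proof.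
  intros H eps Heps. destruct (H eps Heps) as [N HN]. exists (2 * N)%nat. intros n Hn.
  destruct (Nat.Even_or_Odd n) as [[m Hm]|[m Hm]]; subst n.
  - rewrite (proj1 (ilv_e_sums e m)). apply HN. lia.
  - replace (2 * m + 1)%nat with (S (2 * m)) by lia.
    rewrite (proj2 (ilv_e_sums e m)). apply HN. lia.
Qed.

Lemma ilv_o_inf (e : nat -> R) l : infinite_sum e l -> infinite_sum (ilv_o e) l.
Proof.
  intros H eps Heps. destruct (H eps Heps) as [N HN]. exists (S (2 * N))%nat. intros n Hn.
  destruct (Nat.Even_or_Odd n) as [[m Hm]|[m Hm]]; subst n.
  - destruct m. lia. rewrite (proj2 (ilv_o_sums e m)). apply HN. lia.
  - replace (2 * m + 1)%nat with (S (2 * m)) by lia.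
    rewrite (proj1 (ilv_o_sums e m)). apply HN. lia.
Qed.

Lemma ilv_e_2m e m : ilv_e e (2 * m) = e m.
Proof. unfold ilv_e. rewrite even_2m, Nat.div2_double. reflexivity. Qed.
Lemma ilv_e_2m1 e m : ilv_e e (S (2 * m)) = 0.
Proof. unfold ilv_e. rewrite even_2m1. reflexivity. Qed.
Lemma ilv_o_2m e m : ilv_o e (2 * m) = 0.
Proof. unfold ilv_o. rewrite even_2m. reflexivity. Qed.
Lemma ilv_o_2m1 e m : ilv_o e (S (2 * m)) = e m.
Proof. unfold ilv_o. rewrite even_2m1, div2_2m1. reflexivity. Qed.

Lemma inf_scal (f : nat -> R) l c : infinite_sum f l -> infinite_sum (fun n => c * f n) (c * l).
Proof.
  intros H. apply is_series_Reals. apply is_series_Reals in H.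
  exact (is_series_scal (K:=R_AbsRing) (V:=R_NormedModule) c f l H).
Qed.

Ltac cpair := unfold Cmult, Cplus, Copp, Cminus, RtoC; simpl; f_equal; ring.

Lemma Cpow_ib (b : R) m :
  Cpow (0, b) (2 * m) = ((-1) ^ m * b ^ (2 * m), 0) /\
  Cpow (0, b) (S (2 * m)) = (0, (-1) ^ m * b ^ (S (2 * m))).
Proof.
  induction m.
  - simpl. split; cpair.
  - destruct IHm as [I1 I2].
    assert (E : Cpow (0, b) (2 * S m) = ((-1) ^ S m * b ^ (2 * S m), 0)).
    { replace (2 * S m)%nat with (S (S (2 * m))) by lia. rewrite Cpow_S, I2.
      replace (S (S (2 * m))) with (2 * S m)%nat by lia.
      replace (2 * S m)%nat with (S (S (2 * m))) by lia. simpl pow. cpair. }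
    split; auto. rewrite Cpow_S, E. replace (2 * S m)%nat with (S (S (2 * m))) by lia.
    simpl pow. cpair.
Qed.

Definition Bt (b : R) n : C := (RtoC (/ INR (fact n)) * Cpow (0, b) n)%C.

Lemma Bt_fst b n : fst (Bt b n) = ilv_e (fun m => cos_n m * (Rsqr b) ^ m) n.
Proof.
  unfold Bt. destruct (Nat.Even_or_Odd n) as [[m Hm]|[m Hm]]; subst n.
  - rewrite (proj1 (Cpow_ib b m)), ilv_e_2m. unfold cos_n, Rsqr. rewrite pow_mult. simpl. rewrite Rmult_1_r. field.
    apply INR_fact_neq_0.
  - replace (2 * m + 1)%nat with (S (2 * m)) by lia.
    rewrite (proj2 (Cpow_ib b m)), ilv_e_2m1. simpl. ring.
Qed.

Lemma Bt_snd b n : snd (Bt b n) = ilv_o (fun m => b * (sin_n m * (Rsqr b) ^ m)) n.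
Proof.
  unfold Bt. destruct (Nat.Even_or_Odd n) as [[m Hm]|[m Hm]]; subst n.
  - rewrite (proj1 (Cpow_ib b m)), ilv_o_2m. simpl. ring.
  - replace (2 * m + 1)%nat with (S (2 * m)) by lia.
    rewrite (proj2 (Cpow_ib b m)), ilv_o_2m1. unfold sin_n, Rsqr.
    replace (2 * m + 1)%nat with (S (2 * m)) by lia. change (b ^ S (2 * m)) with (b * b ^ (2 * m)). rewrite pow_mult.
    pose proof (INR_fact_neq_0 (S (2 * m))). set (f := INR (fact (S (2 * m)))) in *. simpl. rewrite Rmult_1_r. field. auto.
Qed.

Lemma inf_ext (f g : nat -> R) l : (forall n, f n = g n) -> infinite_sum f l -> infinite_sum g l.
Proof.
  intros E H eps Heps. destruct (H eps Heps) as [N HN]. exists N. intros n Hn.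
  rewrite <- (sum_eq f g n) by (intros; apply E). apply HN; auto.
Qed.

Lemma cos_series b : infinite_sum (fun n => fst (Bt b n)) (cos b).
Proof.
  apply inf_ext with (f := ilv_e (fun m => cos_n m * (Rsqr b) ^ m)).
  { intros n; rewrite Bt_fst; reflexivity. }
  apply ilv_e_inf. unfold cos. destruct (exist_cos (Rsqr b)) as [l Hl]. exact Hl.
Qed.

Lemma sin_series b : infinite_sum (fun n => snd (Bt b n)) (sin b).
Proof.
  apply inf_ext with (f := ilv_o (fun m => b * (sin_n m * (Rsqr b) ^ m))).
  { intros n; rewrite Bt_snd; reflexivity. }
  apply ilv_o_inf. unfold sin. destruct (exist_sin (Rsqr b)) as [l Hl]. apply inf_scal. exact Hl.
Qed.

Lemma Cmod_RtoC_mult (r : R) (v : C) : Cmod (RtoC r * v)%C = Rabs r * Cmod v.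
Proof. rewrite Cmod_mult. f_equal. unfold Cmod, RtoC. simpl.
  rewrite Rmult_0_l, Rplus_0_r, Rmult_1_r. apply sqrt_Rsqr_abs. Qed.

Lemma Cmod_Bt b n : Cmod (Bt b n) = / INR (fact n) * Rabs b ^ n.
Proof.
  unfold Bt. rewrite Cmod_RtoC_mult, Cmod_pow. rewrite Rabs_pos_eq.
  2:{ apply Rlt_le, Rinv_0_lt_compat, INR_fact_lt_0. }
  f_equal. f_equal. unfold Cmod. simpl. rewrite Rmult_0_l, Rplus_0_l, Rmult_1_r. apply sqrt_Rsqr_abs.
Qed.

Lemma ex_series_expabs (a : R) : ex_series (fun n => / INR (fact n) * Rabs a ^ n).
Proof. exists (exp (Rabs a)). apply is_series_Reals. apply exp_series. Qed.

Lemma Rabs_A (a : R) n : Rabs (/ INR (fact n) * a ^ n) = / INR (fact n) * Rabs a ^ n.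
Proof. rewrite Rabs_mult, RPow_abs. rewrite (Rabs_pos_eq (/ _)). auto.
  apply Rlt_le, Rinv_0_lt_compat, INR_fact_lt_0. Qed.

Lemma im_le_Cmod' (c : C) : Rabs (snd c) <= Cmod c.
Proof. destruct c as [a b]. unfold Cmod. simpl. rewrite <- sqrt_Rsqr_abs.
  apply sqrt_le_1_alt. unfold Rsqr. nra. Qed.

Lemma Cexp_series (z : C) : Cser (fun n => (RtoC (/ INR (fact n)) * Cpow z n)%C) (Cexp z).
Proof.
  destruct z as [a b].
  set (A := fun n => / INR (fact n) * a ^ n).
  assert (HA : is_series A (exp a)). { apply is_series_Reals. apply exp_series. }
  assert (HAabs : ex_series (fun n => Rabs (A n))).
  { eapply (ex_series_le (K:=R_AbsRing) (V:=R_CompleteNormedModule)). 2: apply (ex_series_expabs a). intros n. unfold A. rewrite Rabs_A.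
    change (norm (/ INR (fact n) * Rabs a ^ n)) with (Rabs (/ INR (fact n) * Rabs a ^ n)).
    rewrite Rabs_pos_eq. lra. apply Rmult_le_pos. apply Rlt_le, Rinv_0_lt_compat, INR_fact_lt_0.
    apply pow_le, Rabs_pos. }
  assert (Hc : is_series (fun n => fst (Bt b n)) (cos b)). { apply is_series_Reals, cos_series. }
  assert (Hs : is_series (fun n => snd (Bt b n)) (sin b)). { apply is_series_Reals, sin_series. }
  assert (Hcabs : ex_series (fun n => Rabs (fst (Bt b n)))).
  { eapply (ex_series_le (K:=R_AbsRing) (V:=R_CompleteNormedModule)). 2: apply (ex_series_expabs b). intros n.
    change (norm (Rabs (fst (Bt b n)))) with (Rabs (Rabs (fst (Bt b n)))). rewrite Rabs_Rabsolu.
    rewrite <- Cmod_Bt. apply re_le_Cmod. }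
  assert (Hsabs : ex_series (fun n => Rabs (snd (Bt b n)))).
  { eapply (ex_series_le (K:=R_AbsRing) (V:=R_CompleteNormedModule)). 2: apply (ex_series_expabs b). intros n.
    change (norm (Rabs (snd (Bt b n)))) with (Rabs (Rabs (snd (Bt b n)))). rewrite Rabs_Rabsolu.
    rewrite <- Cmod_Bt. apply im_le_Cmod'. }
  pose proof (is_series_mult _ _ _ _ HA Hc HAabs Hcabs) as HR.
  pose proof (is_series_mult _ _ _ _ HA Hs HAabs Hsabs) as HI.
  assert (Hterm : forall n, (RtoC (/ INR (fact n)) * Cpow (a, b) n =
                    csum (fun k => RtoC (A k) * Bt b (n - k)) (S n))%C).
  { intros n. replace (a, b) with (RtoC a + (0, b))%C by cpair. rewrite Cbinom.
    rewrite <- csum_mult_l. apply csum_ext. intros k Hk. unfold bint, Bt, A.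
    rewrite <- RtoC_pow.
    assert (E : / INR (fact n) * Binomial.C n k * a ^ k = / INR (fact k) * a ^ k * / INR (fact (n - k))).
    { unfold Binomial.C. field; repeat split; apply INR_fact_neq_0. }
    transitivity (RtoC (/ INR (fact n) * Binomial.C n k * a ^ k) * Cpow (0, b) (n - k))%C.
    { rewrite !RtoC_mult. ring. }
    rewrite E, !RtoC_mult. ring. }
  replace (Cexp (a, b)) with (exp a * cos b, exp a * sin b).
  2:{ unfold Cexp. simpl. cpair. }
  apply Cser_re_im.
  - apply is_series_Reals in HR. eapply inf_ext. 2: exact HR. intros n. cbv beta.
    rewrite Hterm, csum_fst. apply sum_eq. intros k Hk. destruct (Bt b (n - k)). simpl. ring.
  - apply is_series_Reals in HI. eapply inf_ext. 2: exact HI. intros n. cbv beta.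
    rewrite Hterm, csum_snd. apply sum_eq. intros k Hk. destruct (Bt b (n - k)). simpl. ring.
Qed.

Definition Tst (n k : nat) : R := sum_f_R0 (fun j => (-1) ^ (k - j) * Binomial.C k j * INR j ^ n) k.

Lemma binC_shift m j : (j <= m)%nat -> Binomial.C (S m) j * INR (S (m - j)) = INR (S m) * Binomial.C m j.
Proof.
  intros Hj. unfold Binomial.C. replace (S m - j)%nat with (S (m - j)) by lia.
  change (fact (S m)) with (S m * fact m)%nat. change (fact (S (m - j))) with (S (m - j) * fact (m - j))%nat.
  rewrite !mult_INR. field. repeat split; try apply INR_fact_neq_0; apply not_0_INR; lia.
Qed.

Lemma Tst_0 k : Tst 0 k = 0 ^ k.
Proof.
  unfold Tst. replace (0 ^ k) with ((1 + -1) ^ k) by (f_equal; ring). rewrite binomial.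
  apply sum_eq. intros j Hj. simpl. rewrite pow1. ring.
Qed.

Lemma Tst_S0 n : Tst (S n) 0 = 0.
Proof. unfold Tst. simpl. ring. Qed.

Lemma Tst_SS n m : Tst (S n) (S m) = INR (S m) * Tst n (S m) + INR (S m) * Tst n m.
Proof.
  unfold Tst.
  rewrite (sum_eq _ (fun j => INR (S m) * ((-1) ^ (S m - j) * Binomial.C (S m) j * INR j ^ n)
                    - (-1) ^ (S m - j) * Binomial.C (S m) j * INR (S m - j) * INR j ^ n)).
  2:{ intros j Hj. rewrite minus_INR by lia. change (INR j ^ S n) with (INR j * INR j ^ n). ring. }
  rewrite minus_sum.
  assert (E : sum_f_R0 (fun j => (-1) ^ (S m - j) * Binomial.C (S m) j * INR (S m - j) * INR j ^ n) (S m)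
              = - (INR (S m) * sum_f_R0 (fun j => (-1) ^ (m - j) * Binomial.C m j * INR j ^ n) m)).
  { rewrite tech5. rewrite Nat.sub_diag. simpl INR at 2. rewrite Rmult_0_r, Rmult_0_l, Rplus_0_r.
    rewrite (Ropp_mult_distr_l (INR (S m))), scal_sum.
    apply sum_eq. intros j Hj. replace (S m - j)%nat with (S (m - j)) by lia.
    transitivity ((-1) ^ S (m - j) * (Binomial.C (S m) j * INR (S (m - j))) * INR j ^ n). ring.
    rewrite binC_shift by exact Hj. simpl pow. ring. }
  rewrite E. rewrite (scal_sum (fun j => (-1) ^ (S m - j) * Binomial.C (S m) j * INR j ^ n) (S m) (INR (S m))).
  rewrite (sum_eq (fun i => INR (S m) * ((-1) ^ (S m - i) * Binomial.C (S m) i * INR i ^ n))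
     (fun i => (-1) ^ (S m - i) * Binomial.C (S m) i * INR i ^ n * INR (S m))) by (intros; ring).
  ring.
Qed.

Lemma stirling2_gt n k : (n < k)%nat -> stirling2 n k = 0%nat.
Proof.
  revert k. induction n; intros k Hk.
  - destruct k. lia. reflexivity.
  - destruct k. lia. simpl. rewrite IHn, IHn by lia. lia.
Qed.

Lemma stir_formula n k : Tst n k = INR (fact k) * INR (stirling2 n k).
Proof.
  revert k. induction n; intros k.
  - rewrite Tst_0. destruct k; simpl; ring.
  - destruct k. rewrite Tst_S0. simpl. ring.
    rewrite Tst_SS, !IHn. change (stirling2 (S n) (S k)) with (S k * stirling2 n (S k) + stirling2 n k)%nat.
    change (fact (S k)) with (S k * fact k)%nat. rewrite plus_INR, !mult_INR. ring.
Qed.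

Open Scope C_scope.

Lemma Cexp_plus (x y : C) : Cexp (x + y) = Cexp x * Cexp y.
Proof.
  destruct x as [a b], y as [c d]. unfold Cexp. simpl.
  rewrite exp_plus, cos_plus, sin_plus. cpair.
Qed.

Lemma Cexp_0 : Cexp 0 = 1.
Proof. unfold Cexp. simpl. rewrite exp_0, cos_0, sin_0. cpair. Qed.

Lemma Cexp_RtoC (x : R) : Cexp (RtoC x) = RtoC (exp x).
Proof. unfold Cexp. simpl. rewrite cos_0, sin_0. cpair. Qed.

Lemma Cexp_neg (x : C) : Cexp x * Cexp (- x) = 1.
Proof. rewrite <- Cexp_plus. replace (x + - x) with (RtoC 0) by ring. apply Cexp_0. Qed.

Lemma Cexp_mult_nat (z : C) j : Cexp (RtoC (INR j) * z) = Cpow (Cexp z) j.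
Proof.
  induction j.
  - simpl. replace (RtoC 0 * z) with (RtoC 0) by ring. apply Cexp_0.
  - rewrite S_INR, RtoC_plus, Cpow_S, <- IHj, <- Cexp_plus. f_equal. ring.
Qed.

Lemma Cser_zero : Cser (fun _ => RtoC 0) (RtoC 0).
Proof. apply Cser_cconv. intros eps Heps. exists O. intros n _. rewrite csum_zero.
  replace (0 - 0) with (RtoC 0) by ring. rewrite Cmod_0. auto. Qed.

Lemma Cser_csum (f : nat -> nat -> C) (l : nat -> C) m :
  (forall j, (j < m)%nat -> Cser (f j) (l j)) ->
  Cser (fun n => csum (fun j => f j n) m) (csum l m).
Proof.
  induction m; intros H.
  - simpl. apply Cser_zero.
  - simpl. apply (is_series_plus (K:=C_AbsRing) (V:=C_NormedModule)).
    apply IHm. intros; apply H; lia. apply H; lia.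
Qed.

Lemma Cser_scal (c : C) (a : nat -> C) l : Cser a l -> Cser (fun n => c * a n) (c * l).
Proof. intros H. exact (is_series_scal (K:=C_AbsRing) (V:=C_NormedModule) c a l H). Qed.

Lemma Cser_ext (a b : nat -> C) l : (forall n, a n = b n) -> Cser a l -> Cser b l.
Proof. intros E H. exact (is_series_ext (K:=C_AbsRing) (V:=C_NormedModule) a b l E H). Qed.

Lemma Cser_ext_l (a : nat -> C) l l' : l = l' -> Cser a l -> Cser a l'.
Proof. intros ->; auto. Qed.

Lemma csum_RtoC (g : nat -> R) k : csum (fun j => RtoC (g j)) (S k) = RtoC (sum_f_R0 g k).
Proof. induction k. simpl. ring. rewrite csum_S, IHk. simpl. rewrite RtoC_plus. reflexivity. Qed.

Lemma RtoC_neq0 (r : R) : r <> 0%R -> RtoC r <> 0.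
Proof. intros H E. apply H. injection E. auto. Qed.

Lemma stir_series (z : C) k :
  Cser (fun n => RtoC (INR (stirling2 n k) / INR (fact n)) * Cpow z n)
       (Cpow (Cexp z - 1) k / RtoC (INR (fact k))).
Proof.
  assert (Hk : RtoC (INR (fact k)) <> 0).
  { intros H. apply (INR_fact_neq_0 k). injection H. auto. }
  set (c := fun j => RtoC (Binomial.C k j) * Cpow (Copp (RtoC 1)) (k - j)).
  assert (H1 : Cser (fun n => csum (fun j => c j * (RtoC (/ INR (fact n)) * Cpow (RtoC (INR j) * z) n)) (S k))
                    (csum (fun j => c j * Cexp (RtoC (INR j) * z)) (S k))).
  { apply Cser_csum. intros j _. apply Cser_scal. apply Cexp_series. }
  apply Cser_scal with (c := / RtoC (INR (fact k))) in H1.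
  eapply Cser_ext_l.
  2: eapply Cser_ext. 3: exact H1.
  - unfold Cminus, Cdiv. rewrite Cbinom. rewrite (Cmult_comm (csum (bint _ _ _) _)). f_equal.
    apply csum_ext. intros j _. unfold c, bint. rewrite Cexp_mult_nat. ring.
  - intros n. cbv beta.
    rewrite (csum_ext _ (fun j => RtoC ((-1) ^ (k - j) * Binomial.C k j * INR j ^ n) * (RtoC (/ INR (fact n)) * Cpow z n))).
    2:{ intros j _. unfold c. rewrite Cpow_mult_l, <- RtoC_opp, <- !RtoC_pow.
        replace (Ropp 1) with (-1)%R by ring. rewrite !RtoC_mult. ring. }
    rewrite csum_mult_r, csum_RtoC. fold (Tst n k). rewrite stir_formula.
    rewrite !RtoC_mult. unfold Rdiv. rewrite RtoC_mult. rewrite RtoC_inv by apply INR_fact_neq_0.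
    field. split; [apply RtoC_neq0, INR_fact_neq_0 | exact Hk].
Qed.

Close Scope C_scope.


Notation CRder f x l := (@is_derive R_AbsRing C_R_NormedModule f x l).

Lemma multR (a b : R) : @mult (AbsRing.Ring R_AbsRing) a b = (a * b)%R.
Proof. reflexivity. Qed.

Lemma CRder_pair (f g : R -> R) x f' g' :
  is_derive f x f' -> is_derive g x g' -> CRder (fun u => (f u, g u)) x (f', g').
Proof.
  intros Hf Hg.
  pose proof (is_derive_scal_l (K:=R_AbsRing) (V:=C_R_NormedModule) f x f' (1%R, 0%R) Hf) as H1.
  pose proof (is_derive_scal_l (K:=R_AbsRing) (V:=C_R_NormedModule) g x g' (0%R, 1%R) Hg) as H2.
  pose proof (is_derive_plus _ _ x _ _ H1 H2) as H.
  eapply is_derive_ext. 2: eapply filterdiff_ext_lin. 2: exact H.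
  - intros t. simpl. unfold scal, plus; simpl. unfold prod_scal, prod_plus; simpl.
    unfold scal, plus, mult; simpl. change (@mult (AbsRing.Ring R_AbsRing)) with Rmult. f_equal; ring.
  - intros y. simpl. unfold scal, plus; simpl. unfold prod_scal, prod_plus; simpl.
    unfold scal, plus, mult; simpl. change (@mult (AbsRing.Ring R_AbsRing)) with Rmult. f_equal; ring.
Qed.

Lemma CRder_fst (F : R -> C) x l : CRder F x l -> is_derive (fun u => fst (F u)) x (fst l).
Proof.
  intros H. unfold is_derive in *.
  pose proof (filterdiff_comp (K:=R_AbsRing) (U:=R_NormedModule) (V:=C_R_NormedModule) (W:=R_NormedModule)
     F (fun t => fst t) _ (fun t => fst t) H (filterdiff_linear _ is_linear_fst)) as H2.
  eapply filterdiff_ext_lin. exact H2. intros y. reflexivity.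
Qed.

Lemma CRder_snd (F : R -> C) x l : CRder F x l -> is_derive (fun u => snd (F u)) x (snd l).
Proof.
  intros H. unfold is_derive in *.
  pose proof (filterdiff_comp (K:=R_AbsRing) (U:=R_NormedModule) (V:=C_R_NormedModule) (W:=R_NormedModule)
     F (fun t => snd t) _ (fun t => snd t) H (filterdiff_linear _ is_linear_snd)) as H2.
  eapply filterdiff_ext_lin. exact H2. intros y. reflexivity.
Qed.

Lemma CRder_ext (F G : R -> C) x l l' : (forall u, F u = G u) -> l = l' -> CRder F x l -> CRder G x l'.
Proof. intros E <- H. eapply is_derive_ext. 2: exact H. exact E. Qed.

Lemma CRder_mult (F G : R -> C) x F' G' :
  CRder F x F' -> CRder G x G' -> CRder (fun u => (F u * G u)%C) x (F' * G x + F x * G')%C.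
Proof.
  intros HF HG.
  pose proof (CRder_fst _ _ _ HF) as F1. pose proof (CRder_snd _ _ _ HF) as F2.
  pose proof (CRder_fst _ _ _ HG) as G1. pose proof (CRder_snd _ _ _ HG) as G2.
  eapply CRder_ext. 3: apply CRder_pair.
  3: apply (is_derive_minus _ _ _ _ _ (is_derive_mult _ _ _ _ _ F1 G1 (fun a b => Rmult_comm a b))
                                      (is_derive_mult _ _ _ _ _ F2 G2 (fun a b => Rmult_comm a b))).
  3: apply (is_derive_plus _ _ _ _ _ (is_derive_mult _ _ _ _ _ F1 G2 (fun a b => Rmult_comm a b))
                                      (is_derive_mult _ _ _ _ _ F2 G1 (fun a b => Rmult_comm a b))).
  - intros u. reflexivity.
  - destruct F', G', (F x), (G x). simpl. unfold minus, plus, opp, mult; simpl.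
    change (@mult (AbsRing.Ring R_AbsRing)) with Rmult. unfold Cmult, Cplus. simpl. f_equal; ring.
Qed.


Lemma CRder_const (c : C) x : CRder (fun _ => c) x (RtoC 0).
Proof. apply (is_derive_const (K:=R_AbsRing) (V:=C_R_NormedModule)). Qed.

Lemma Cexp_pair (a b : R) : Cexp (a, b) = (exp a * cos b, exp a * sin b)%R.
Proof. unfold Cexp. simpl. cpair. Qed.

Lemma CRder_lin (c : C) x : CRder (fun u => (RtoC u * c)%C) x c.
Proof.
  destruct c as [a b].
  eapply CRder_ext. 3: apply CRder_pair with (f := fun u => (u * a)%R) (g := fun u => (u * b)%R).
  - intros u. cpair.
  - reflexivity.
  - auto_derive; auto. ring.
  - auto_derive; auto. ring.
Qed.

Lemma CRder_cexp_lin (c : C) x : CRder (fun u => Cexp (RtoC u * c)%C) x (c * Cexp (RtoC x * c))%C.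
Proof.
  destruct c as [a b].
  eapply CRder_ext. 3: apply CRder_pair with (f := fun u => (exp (u * a) * cos (u * b))%R)
                                          (g := fun u => (exp (u * a) * sin (u * b))%R)
     (f' := (a * exp (x * a) * cos (x * b) - b * exp (x * a) * sin (x * b))%R)
     (g' := (a * exp (x * a) * sin (x * b) + b * exp (x * a) * cos (x * b))%R).
  - intros u. replace (RtoC u * (a, b))%C with ((u * a)%R, (u * b)%R) by cpair. rewrite Cexp_pair. reflexivity.
  - replace (RtoC x * (a, b))%C with ((x * a)%R, (x * b)%R) by cpair. rewrite Cexp_pair.
    cpair.
  - auto_derive; auto. ring.
  - auto_derive; auto. ring.
Qed.

Open Scope C_scope.
Ltac toC := match goal with |- ?a = ?b => change (@eq C a b) end.

Lemma CRder_cpow_lin (c : C) n x :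
  CRder (fun u => Cpow (RtoC u * c) n) x (RtoC (INR n) * c * Cpow (RtoC x * c) (pred n)).
Proof.
  induction n.
  - eapply CRder_ext. 3: apply CRder_const with (c := RtoC 1). intros u; reflexivity. simpl. ring.
  - eapply CRder_ext. 3: apply (CRder_mult _ _ x _ _ (CRder_lin c x) IHn).
    + intros u. reflexivity.
    + destruct n.
      * simpl. ring.
      * simpl pred. rewrite (Cpow_S _ n). rewrite !S_INR, !RtoC_plus. toC. ring.
Qed.

Fixpoint Qs (w : C) (u : R) (m : nat) : C :=
  match m with O => 0 | S k => Qs w u k + RtoC (/ INR (fact k)) * Cpow (RtoC u * w) k end.

Lemma CRder_Qs (w : C) m x : CRder (fun u => Qs w u (S m)) x (w * Qs w x m).
Proof.
  induction m.
  - eapply CRder_ext. 3: apply CRder_const with (c := RtoC 1).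
    + intros u. simpl. rewrite Rinv_1. ring.
    + simpl. ring.
  - eapply CRder_ext. 3: apply (is_derive_plus (K:=R_AbsRing) (V:=C_R_NormedModule) _ _ x _ _ IHm
        (CRder_mult _ _ x _ _ (CRder_const (RtoC (/ INR (fact (S m)))) x) (CRder_cpow_lin w (S m) x))).
    + intros u. reflexivity.
    + simpl pred. change (@plus _ ?a ?b) with (Cplus a b). toC.
      simpl Qs.
      replace (RtoC (/ INR (fact (S m))) * (RtoC (INR (S m)) * w * Cpow (RtoC x * w) m))
        with (RtoC (/ INR (fact m)) * w * Cpow (RtoC x * w) m).
      ring.
      assert (E : (/ INR (fact m) = / INR (fact (S m)) * INR (S m))%R).
      { change (fact (S m)) with (S m * fact m)%nat. rewrite mult_INR. field.
        split. apply INR_fact_neq_0. apply not_0_INR. lia. }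
      rewrite E, RtoC_mult. ring.
Qed.

Lemma Qs_0 (w : C) m : Qs w 0 (S m) = 1.
Proof.
  induction m.
  - simpl. rewrite Rinv_1. ring.
  - change (Qs w 0 (S (S m))) with (Qs w 0 (S m) + RtoC (/ INR (fact (S m))) * Cpow (RtoC 0 * w) (S m)).
    rewrite IHm. rewrite Cpow_S. replace (RtoC 0 * w) with (RtoC 0) by ring. ring.
Qed.

Definition gint (w : C) (m : nat) (u : R) : C := Cexp (- (RtoC u * w)) * Cpow (RtoC u * w) (S m - 1).

Definition Hprim (w : C) (m : nat) (u : R) : C :=
  / w * (- RtoC (INR (fact m)) * (Cexp (RtoC u * (- w)) * Qs w u (S m))).

Lemma CRder_Hprim (w : C) m x : w <> 0 -> CRder (Hprim w m) x (gint w m x).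
Proof.
  intros Hw.
  eapply CRder_ext. 3: apply (CRder_mult _ _ x _ _ (CRder_const (/ w * - RtoC (INR (fact m))) x)
         (CRder_mult _ _ x _ _ (CRder_cexp_lin (- w) x) (CRder_Qs w m x))).
  - intros u. unfold Hprim. toC. ring.
  - unfold gint. simpl Qs. replace (S m - 1)%nat with m by lia.
    replace (- (RtoC x * w)) with (RtoC x * - w) by ring. toC. field_simplify; auto.
    rewrite RtoC_inv by apply INR_fact_neq_0. field. split; auto.
    apply RtoC_neq0, INR_fact_neq_0.
Qed.

Lemma gint_cont (w : C) m x : continuous (gint w m) x.
Proof.
  apply (ex_derive_continuous (K:=R_AbsRing) (V:=C_R_NormedModule)).
  eexists. eapply CRder_ext. 3: apply (CRder_mult _ _ x _ _ (CRder_cexp_lin (- w) x) (CRder_cpow_lin w (S m - 1) x)).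
  - intros u. unfold gint. f_equal. f_equal. ring.
  - reflexivity.
Qed.

Lemma lower_gamma_val (w : C) m : w <> 0 ->
  lower_gamma (S m) w = RtoC (INR (fact m)) * (1 - Cexp (- w) * Qs w 1 (S m)).
Proof.
  intros Hw.
  assert (HI : is_RInt (V := C_R_CompleteNormedModule) (gint w m) 0 1 (minus (Hprim w m 1) (Hprim w m 0))).
  { apply (is_RInt_derive (V := C_R_CompleteNormedModule)).
    - intros x _. apply CRder_Hprim; auto.
    - intros x _. apply gint_cont. }
  unfold lower_gamma. fold (gint w m).
  rewrite (is_RInt_unique (V := C_R_CompleteNormedModule) _ _ _ _ HI).
  change (minus (Hprim w m 1) (Hprim w m 0)) with (Hprim w m 1 - Hprim w m 0).
  unfold Hprim. rewrite Qs_0. replace (RtoC 0 * - w) with (RtoC 0) by ring. rewrite Cexp_0.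
  replace (RtoC 1 * - w) with (- w) by ring.
  field. auto.
Qed.


Open Scope C_scope.

Lemma binC_inv k m : (/ Binomial.C (k + S m) (S m) * / INR (fact k) = INR (fact (S m)) * / INR (fact (S m + k)))%R.
Proof.
  unfold Binomial.C. replace (k + S m - S m)%nat with k by lia. replace (S m + k)%nat with (k + S m)%nat by lia.
  field. repeat split; apply INR_fact_neq_0.
Qed.

Lemma tail_series (w : C) m : w <> 0 ->
  Cser (fun k => RtoC (/ Binomial.C (k + S m) (S m)) * (Cpow w k / RtoC (INR (fact k))))
       (RtoC (INR (fact (S m))) / Cpow w (S m) *
          (Cexp w - csum (fun j => RtoC (/ INR (fact j)) * Cpow w j) (S m))).
Proof.
  intros Hw.
  set (a := fun j => RtoC (/ INR (fact j)) * Cpow w j).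
  assert (H : Cser (fun k => a (S m + k)%nat) (Cexp w - csum a (S m))).
  { apply (is_series_incr_n (K:=C_AbsRing) (V:=C_NormedModule)). lia.
    eapply Cser_ext_l. 2: apply Cexp_series.
    change (Cexp w = (Cexp w - csum a (S m)) + sum_n a m). rewrite sum_n_csum. ring. }
  apply Cser_scal with (c := RtoC (INR (fact (S m))) / Cpow w (S m)) in H.
  eapply Cser_ext. 2: exact H.
  intros k. unfold a. rewrite Cpow_add_r.
  assert (Hp : Cpow w (S m) <> 0) by (apply Cpow_nz; auto).
  transitivity (RtoC (INR (fact (S m)) * / INR (fact (S m + k))) * Cpow w k).
  { rewrite RtoC_mult. field. auto. }
  rewrite <- binC_inv, RtoC_mult, (RtoC_inv (INR (fact k))) by apply INR_fact_neq_0. field.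
  apply RtoC_neq0, INR_fact_neq_0.
Qed.

Fixpoint rsum (f : nat -> R) (n : nat) : R :=
  match n with O => 0%R | S m => (rsum f m + f m)%R end.

Lemma sum_f_rsum (f : nat -> R) N : sum_f_R0 f N = rsum f (S N).
Proof. induction N. simpl. ring. simpl sum_f_R0. rewrite IHN. reflexivity. Qed.

Lemma cconv_plus u v a b : cconv u a -> cconv v b -> cconv (fun n => u n + v n) (a + b).
Proof.
  intros Hu Hv eps Heps. destruct (Hu (eps/2)%R ltac:(lra)) as [N1 H1]. destruct (Hv (eps/2)%R ltac:(lra)) as [N2 H2].
  exists (max N1 N2). intros n Hn.
  replace (u n + v n - (a + b)) with ((u n - a) + (v n - b)) by ring.
  eapply Rle_lt_trans. apply Cmod_triangle. specialize (H1 n ltac:(lia)). specialize (H2 n ltac:(lia)). lra.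
Qed.

Lemma cconv_csum (F : nat -> nat -> C) (A : nat -> C) :
  (forall k, cconv (fun N => F N k) (A k)) -> forall K, cconv (fun N => csum (F N) K) (csum A K).
Proof.
  intros H K. induction K.
  - intros eps Heps. exists O. intros n _. simpl. replace (RtoC 0 - RtoC 0) with (RtoC 0) by ring.
    rewrite Cmod_0. auto.
  - simpl. apply cconv_plus; auto.
Qed.

Lemma csum_tail_bound (f : nat -> C) (g : nat -> R) a b : (a <= b)%nat ->
  (forall k, (Cmod (f k) <= g k)%R) -> (Cmod (csum f b - csum f a) <= rsum g b - rsum g a)%R.
Proof.
  intros Hab Hfg. induction Hab.
  - replace (csum f a - csum f a) with (RtoC 0) by ring. rewrite Cmod_0. lra.
  - simpl. replace (csum f m + f m - csum f a) with ((csum f m - csum f a) + f m) by ring.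
    eapply Rle_trans. apply Cmod_triangle. specialize (Hfg m). lra.
Qed.

Lemma tannery (F : nat -> nat -> C) (A : nat -> C) (M : nat -> R) (lM : R) (L : C) :
  (forall k, cconv (fun N => F N k) (A k)) ->
  (forall N k, (Cmod (F N k) <= M k)%R) ->
  infinite_sum M lM ->
  Cser A L ->
  cconv (fun N => csum (F N) (S N)) L.
Proof.
  intros Hpt Hb HM HA eps Heps.
  destruct (HM (eps/8)%R ltac:(lra)) as [N0 H0].
  apply Cser_cconv in HA. destruct (HA (eps/4)%R ltac:(lra)) as [K1 HK1].
  set (K := max N0 K1).
  destruct (cconv_csum F A Hpt (S K) (eps/4)%R ltac:(lra)) as [N1 HN1].
  exists (max N1 (S K)). intros N HN.
  replace (csum (F N) (S N) - L) with
     ((csum (F N) (S N) - csum (F N) (S K)) + (csum (F N) (S K) - csum A (S K)) + (csum A (S K) - L)) by ring.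
  assert (T1 : (Cmod (csum (F N) (S N) - csum (F N) (S K)) < eps/4)%R).
  { eapply Rle_lt_trans. apply csum_tail_bound. lia. apply Hb.
    rewrite <- !sum_f_rsum.
    pose proof (H0 N ltac:(lia)) as A1. pose proof (H0 K ltac:(lia)) as A2. unfold R_dist in *.
    apply Rabs_def2 in A1. apply Rabs_def2 in A2. lra. }
  pose proof (HN1 N ltac:(lia)) as T2. pose proof (HK1 K ltac:(lia)) as T3.
  eapply Rle_lt_trans. apply Cmod_triangle. eapply Rle_lt_trans. apply Rplus_le_compat_r. apply Cmod_triangle.
  lra.
Qed.


Open Scope C_scope.

Lemma fact_mul_le k p : (fact k * fact p <= fact (k + p))%nat.
Proof.
  induction k. simpl. lia.
  change (fact (S k)) with (S k * fact k)%nat. change (fact (S k + p)) with (S (k + p) * fact (k + p))%nat.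
  rewrite <- Nat.mul_assoc. apply Nat.mul_le_mono; lia.
Qed.

Lemma binC_ge1 k p : (1 <= Binomial.C (k + p) p)%R.
Proof.
  unfold Binomial.C. replace (k + p - p)%nat with k by lia.
  pose proof (fact_mul_le k p) as H. apply le_INR in H. rewrite mult_INR in H.
  pose proof (INR_fact_lt_0 k). pose proof (INR_fact_lt_0 p).
  apply Rmult_le_reg_r with (INR (fact p) * INR (fact k))%R. nra.
  field_simplify. nra. split; lra.
Qed.

Lemma partial_le_limit (g : nat -> R) l N : infinite_sum g l -> (forall n, (0 <= g n)%R) -> (sum_f_R0 g N <= l)%R.
Proof.
  intros H Hg. destruct (Rle_lt_dec (sum_f_R0 g N) l) as [|Hlt]; auto. exfalso.
  destruct (H (sum_f_R0 g N - l)%R ltac:(lra)) as [N0 HN0].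
  assert (Mono : forall n, (N <= n)%nat -> (sum_f_R0 g N <= sum_f_R0 g n)%R).
  { intros n Hn. induction Hn. lra. simpl. specialize (Hg (S m)). lra. }
  specialize (HN0 (max N N0) ltac:(lia)). specialize (Mono (max N N0) ltac:(lia)).
  unfold R_dist in HN0. apply Rabs_def2 in HN0. lra.
Qed.

Lemma cconv_scal (c : C) u a : cconv u a -> cconv (fun n => c * u n) (c * a).
Proof.
  intros H eps Heps. destruct (H (eps / (Cmod c + 1))%R) as [N HN].
  { apply Rdiv_lt_0_compat; auto. pose proof (Cmod_ge_0 c). lra. }
  exists N. intros n Hn. replace (c * u n - c * a) with (c * (u n - a)) by ring.
  rewrite Cmod_mult. specialize (HN n Hn). pose proof (Cmod_ge_0 c). pose proof (Cmod_ge_0 (u n - a)).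
  apply Rle_lt_trans with ((Cmod c + 1) * Cmod (u n - a))%R. nra.
  apply Rmult_lt_compat_l with (r := (Cmod c + 1)%R) in HN. 2: lra.
  replace ((Cmod c + 1) * (eps / (Cmod c + 1)))%R with eps in HN by (field; lra). exact HN.
Qed.

Lemma Qs_1 (w : C) n : Qs w 1 n = csum (fun j => RtoC (/ INR (fact j)) * Cpow w j) n.
Proof. induction n. reflexivity. simpl. rewrite IHn. replace (RtoC 1 * w) with w by ring. reflexivity. Qed.

Lemma sum_f_R0_zero_tail (h : nat -> R) n N : (n <= N)%nat -> (forall k, (n < k)%nat -> h k = 0%R) ->
  sum_f_R0 h N = sum_f_R0 h n.
Proof. intros HnN Hz. induction HnN. reflexivity. simpl. rewrite IHHnN, Hz by lia. ring. Qed.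

Lemma cconv_ext (u v : nat -> C) l : (forall n, u n = v n) -> cconv u l -> cconv v l.
Proof. intros E H eps Heps. destruct (H eps Heps) as [N HN]. exists N. intros n Hn. rewrite <- E. auto. Qed.

Lemma real_stir (x : R) k :
  infinite_sum (fun n => (INR (stirling2 n k) / INR (fact n) * x ^ n)%R) ((exp x - 1) ^ k / INR (fact k))%R.
Proof.
  pose proof (Cser_re _ _ (stir_series (RtoC x) k)) as H.
  replace ((exp x - 1) ^ k / INR (fact k))%R with
     (fst (Cpow (Cexp (RtoC x) - 1) k / RtoC (INR (fact k)))).
  2:{ rewrite Cexp_RtoC. rewrite <- RtoC_minus, <- RtoC_pow, <- RtoC_div by apply INR_fact_neq_0. reflexivity. }
  eapply inf_ext. 2: exact H. intros n. cbv beta.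
  rewrite <- RtoC_pow, <- RtoC_mult. reflexivity.
Qed.

Lemma Cmod_F (z : C) m N k :
  (Cmod (RtoC (/ Binomial.C (k + S m) (S m)) *
         csum (fun n => RtoC (INR (stirling2 n k) / INR (fact n)) * Cpow z n) (S N))%C
   <= (exp (Cmod z) - 1) ^ k / INR (fact k))%R.
Proof.
  rewrite Cmod_RtoC_mult.
  pose proof (binC_ge1 k (S m)) as HB.
  assert (H0 : (0 <= / Binomial.C (k + S m) (S m) <= 1)%R).
  { split. apply Rlt_le, Rinv_0_lt_compat. lra. rewrite <- Rinv_1. apply Rinv_le_contravar; lra. }
  rewrite Rabs_pos_eq by lra.
  set (g := fun n => (INR (stirling2 n k) / INR (fact n) * Cmod z ^ n)%R).
  assert (Hg : forall n, (0 <= g n)%R).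
  { intros n. unfold g. apply Rmult_le_pos. apply Rmult_le_pos. apply pos_INR.
    apply Rlt_le, Rinv_0_lt_compat, INR_fact_lt_0. apply pow_le, Cmod_ge_0. }
  assert (H1 : (Cmod (csum (fun n => RtoC (INR (stirling2 n k) / INR (fact n)) * Cpow z n)%C (S N)) <= rsum g (S N))%R).
  { pose proof (csum_tail_bound (fun n => RtoC (INR (stirling2 n k) / INR (fact n)) * Cpow z n) g 0 (S N) ltac:(lia)) as T.
    simpl csum at 2 in T. simpl rsum at 2 in T. rewrite Rminus_0_r in T.
    replace (csum (fun n => RtoC (INR (stirling2 n k) / INR (fact n)) * Cpow z n) (S N) - RtoC 0)
      with (csum (fun n => RtoC (INR (stirling2 n k) / INR (fact n)) * Cpow z n) (S N)) in T by ring.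
    apply T. intros n. rewrite Cmod_RtoC_mult, Cmod_pow. unfold g. rewrite Rabs_pos_eq. lra.
    apply Rmult_le_pos. apply pos_INR. apply Rlt_le, Rinv_0_lt_compat, INR_fact_lt_0. }
  rewrite <- sum_f_rsum in H1.
  pose proof (partial_le_limit g _ N (real_stir (Cmod z) k) Hg) as H2.
  pose proof (Cmod_ge_0 (csum (fun n => RtoC (INR (stirling2 n k) / INR (fact n)) * Cpow z n) (S N))).
  nra.
Qed.

Lemma term_eq (z : C) m N n : (n <= N)%nat ->
  (RtoC (pBell n (S m)) * Cpow z n / RtoC (INR (Factorial.fact n)))%C =
  csum (fun k => RtoC (/ Binomial.C (k + S m) (S m)) *
                 (RtoC (INR (stirling2 n k) / INR (fact n)) * Cpow z n)) (S N).
Proof.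
  intros HnN. unfold pBell.
  rewrite <- (sum_f_R0_zero_tail (fun k => (INR (stirling2 n k) / Binomial.C (k + S m) (S m))%R) n N HnN).
  2:{ intros k Hk. rewrite stirling2_gt by lia. simpl. unfold Rdiv. ring. }
  rewrite <- csum_RtoC. unfold Cdiv. rewrite <- !csum_mult_r.
  apply csum_ext. intros k _. unfold Rdiv. rewrite !RtoC_mult.
  rewrite (RtoC_inv (INR (fact n))) by apply INR_fact_neq_0. ring.
Qed.

Close Scope C_scope.

Theorem mainTheorem4 (p : nat) (z : C) :
  (1 <= p)%nat ->
  Cexp z <> RtoC 1 ->
  is_series
    (fun n : nat => (RtoC (pBell n p) * Cpow z n / RtoC (INR (Factorial.fact n)))%C)
    (RtoC (INR p) * Cexp (Cexp z - RtoC 1) / Cpow (Cexp z - RtoC 1) p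
       * lower_gamma p (Cexp z - RtoC 1))%C.
Proof.
  intros Hp Hz. destruct p as [|m]; [lia|].
  set (w := (Cexp z - RtoC 1)%C).
  assert (Hw : w <> RtoC 0).
  { intros E. apply Hz. unfold w in E. replace (Cexp z) with (Cexp z - RtoC 1 + RtoC 1)%C by ring.
    rewrite E. ring. }
  assert (Hwp : Cpow w (S m) <> RtoC 0) by (apply Cpow_nz; auto).
  set (L := (RtoC (INR (fact (S m))) / Cpow w (S m) *
          (Cexp w - csum (fun j => RtoC (/ INR (fact j)) * Cpow w j) (S m)))%C).
  apply Cser_ext_l with L.
  { toC. unfold L. rewrite lower_gamma_val by auto. rewrite Qs_1.
    set (Q := csum (fun j => (RtoC (/ INR (fact j)) * Cpow w j)%C) (S m)).
    pose proof (Cexp_neg w) as En.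
    change (fact (S m)) with (S m * fact m)%nat. rewrite mult_INR, RtoC_mult.
    transitivity (RtoC (INR (S m)) * RtoC (INR (fact m)) / Cpow w (S m) * (Cexp w - (Cexp w * Cexp (- w)) * Q))%C.
    { rewrite En. field. auto. }
    field. auto. }
  apply Cser_cconv.
  set (F := fun N k => (RtoC (/ Binomial.C (k + S m) (S m)) *
         csum (fun n => RtoC (INR (stirling2 n k) / INR (fact n)) * Cpow z n) (S N))%C).
  apply cconv_ext with (u := fun N => csum (F N) (S N)).
  { intros N. symmetry. unfold F.
    rewrite (csum_ext _ (fun n => csum (fun k => RtoC (/ Binomial.C (k + S m) (S m)) *
                 (RtoC (INR (stirling2 n k) / INR (fact n)) * Cpow z n)) (S N))%C).
    2:{ intros n Hn. apply term_eq. lia. }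
    rewrite csum_swap. apply csum_ext. intros k _. rewrite csum_mult_l. reflexivity. }
  apply tannery with (A := fun k => (RtoC (/ Binomial.C (k + S m) (S m)) * (Cpow w k / RtoC (INR (fact k))))%C)
                     (M := fun k => ((exp (Cmod z) - 1) ^ k / INR (fact k))%R)
                     (lM := exp (exp (Cmod z) - 1)).
  - intros k. unfold F. apply cconv_scal. apply Cser_cconv. apply stir_series.
  - intros N k. unfold F. apply Cmod_F.
  - eapply inf_ext. 2: apply exp_series. intros n. cbv beta. unfold Rdiv. ring.
  - apply tail_series. auto.
Qed.
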